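(* Let $e_1<e_2<e_3<e_4$ be distinct reals. On $T^*S^3=\{(\mathbf x,\mathbf y)\in\mathbb R^8:\mathbf x\cdot\mathbf x=1,\mathbf x\cdot\mathbf y=0\}$ let $\ell_{ij}=x_iy_j-x_jy_i$, let $F_i=\sum_{j\ne i}\frac{\ell_{ij}^2}{e_i-e_j}$ ($i=1,\dots,4$, with $\ell_{ji}=-\ell_{ij}$) be the Uhlenbeck integrals, and let $\eta_1=\sum_{i<j}\ell_{ij}^2\sum_{k\ne i,j}e_k$, $\eta_2=\sum_{i<j}\ell_{ij}^2\prod_{k\ne i,j}e_k$. On the energy level $2H=\mathbf y\cdot\mathbf y=1$, $F_i=0$ if and only if $\eta_2-e_i(\eta_1-e_i)=0$; i.e. $F_i$ vanishes exactly along the line $\mathcal L_i:\eta_2-e_i(\eta_1-e_i)=0$.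
   Context: The condition $2H=1$ (i.e. $\sum_{i<j}\ell_{ij}^2=1$) is the normalisation used for the line $\mathcal L_i$. *)

(* Defs.v *)
From HB Require Import structures.
From mathcomp Require Import all_boot all_order all_algebra.
Set Implicit Arguments. Unset Strict Implicit. Unset Printing Implicit Defensive.
Import Order.TTheory GRing.Theory Num.Theory.
Local Open Scope ring_scope.

(* Points of R^8 are pairs (x, y) of vectors x y : 'I_4 -> R (coordinates x_1..x_4, y_1..y_4,
   indexed 0..3). *)

Definition dot4 {R : realFieldType} (x y : 'I_4 -> R) : R := \sum_(i < 4) x i * y i.

Definition ell {R : realFieldType} (x y : 'I_4 -> R) (i j : 'I_4) : R :=
  x i * y j - x j * y i.

Definition uhlenbeckF {R : realFieldType} (e x y : 'I_4 -> R) (i : 'I_4) : R :=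
  \sum_(j < 4 | j != i) (ell x y i j) ^+ 2 / (e i - e j).

Definition eta1 {R : realFieldType} (e x y : 'I_4 -> R) : R :=
  \sum_(i < 4) \sum_(j < 4 | (i < j)%N)
     (ell x y i j) ^+ 2 * \sum_(k < 4 | (k != i) && (k != j)) e k.

Definition eta2 {R : realFieldType} (e x y : 'I_4 -> R) : R :=
  \sum_(i < 4) \sum_(j < 4 | (i < j)%N)
     (ell x y i j) ^+ 2 * \prod_(k < 4 | (k != i) && (k != j)) e k.

(* Main.v *)
Require Import Defs.
From HB Require Import structures.
From mathcomp Require Import all_boot all_order all_algebra.
From mathcomp Require Import ring lra.
Import Order.TTheory GRing.Theory Num.Theory.
Local Open Scope ring_scope.

Definition o0 : 'I_4 := @Ordinal 4 0 isT.
Definition o1 : 'I_4 := @Ordinal 4 1 isT.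
Definition o2 : 'I_4 := @Ordinal 4 2 isT.
Definition o3 : 'I_4 := @Ordinal 4 3 isT.

Lemma big4 (T : Type) (idx : T) (op : Monoid.law idx) (F : 'I_4 -> T) :
  \big[op/idx]_(j < 4) F j = op (op (op (F o0) (F o1)) (F o2)) (F o3).
Proof.
rewrite !big_ord_recr big_ord0 /= Monoid.mul1m.
by congr (op (op (op (F _) (F _)) (F _)) (F _)); apply: val_inj.
Qed.

Lemma cases4 (i : 'I_4) : i = o0 \/ i = o1 \/ i = o2 \/ i = o3.
Proof.
case: i => [[|[|[|[|k]]]] Hk].
- by left; apply: val_inj.
- by right; left; apply: val_inj.
- by right; right; left; apply: val_inj.
- by right; right; right; apply: val_inj.
- by [].
Qed.

Lemma key (R : realFieldType) (A B P S c : R) :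
  S = 1 -> P != 0 -> B = A * P + c * (1 - S) -> (A = 0 <-> B = 0).
Proof.
move=> -> hP ->; rewrite subrr mulr0 addr0; split; first by move->; rewrite mul0r.
by move/eqP; rewrite mulf_eq0 (negbTE hP) orbF => /eqP.
Qed.

Theorem corollary2 (R : realFieldType) (e x y : 'I_4 -> R)
  (he : forall i j : 'I_4, (i < j)%N -> e i < e j)
  (hxx : dot4 x x = 1) (hxy : dot4 x y = 0) (hyy : dot4 y y = 1)
  (i : 'I_4) :
  uhlenbeckF e x y i = 0 <-> eta2 e x y - e i * (eta1 e x y - e i) = 0.
Proof.
have h01 : e o0 - e o1 != 0 by rewrite subr_eq0 lt_eqF // he.
have h02 : e o0 - e o2 != 0 by rewrite subr_eq0 lt_eqF // he.
have h03 : e o0 - e o3 != 0 by rewrite subr_eq0 lt_eqF // he.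
have h12 : e o1 - e o2 != 0 by rewrite subr_eq0 lt_eqF // he.
have h13 : e o1 - e o3 != 0 by rewrite subr_eq0 lt_eqF // he.
have h23 : e o2 - e o3 != 0 by rewrite subr_eq0 lt_eqF // he.
have h10 : e o1 - e o0 != 0 by rewrite subr_eq0 gt_eqF // he.
have h20 : e o2 - e o0 != 0 by rewrite subr_eq0 gt_eqF // he.
have h30 : e o3 - e o0 != 0 by rewrite subr_eq0 gt_eqF // he.
have h21 : e o2 - e o1 != 0 by rewrite subr_eq0 gt_eqF // he.
have h31 : e o3 - e o1 != 0 by rewrite subr_eq0 gt_eqF // he.
have h32 : e o3 - e o2 != 0 by rewrite subr_eq0 gt_eqF // he.
move: hxx hxy hyy; rewrite /dot4 !big4 /= => hxx hxy hyy.
have HS : ell x y o0 o1 ^+ 2 + ell x y o0 o2 ^+ 2 + ell x y o0 o3 ^+ 2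
   + ell x y o1 o2 ^+ 2 + ell x y o1 o3 ^+ 2 + ell x y o2 o3 ^+ 2 = 1.
  have -> : ell x y o0 o1 ^+ 2 + ell x y o0 o2 ^+ 2 + ell x y o0 o3 ^+ 2
   + ell x y o1 o2 ^+ 2 + ell x y o1 o3 ^+ 2 + ell x y o2 o3 ^+ 2 =
   (x o0 * x o0 + x o1 * x o1 + x o2 * x o2 + x o3 * x o3) *
   (y o0 * y o0 + y o1 * y o1 + y o2 * y o2 + y o3 * y o3) -
   (x o0 * y o0 + x o1 * y o1 + x o2 * y o2 + x o3 * y o3) ^+ 2.
    rewrite /ell; ring.
  by rewrite hxx hxy hyy; ring.
rewrite /uhlenbeckF /eta1 /eta2 big_mkcond big4 /=.
have hi := cases4 i.
do ![rewrite big_mkcond big4 /=].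
case: hi => [->|[->|[->|->]]] /=.
- apply: (@key _ _ _ ((e o0 - e o1) * (e o0 - e o2) * (e o0 - e o3)) _ (e o0 ^+ 2) HS).
    by rewrite !mulf_neq0.
  rewrite /ell; field; by rewrite ?h01 ?h02 ?h03 ?h10 ?h20 ?h30 ?h12 ?h13 ?h21 ?h31 ?h23 ?h32.
- apply: (@key _ _ _ ((e o1 - e o0) * (e o1 - e o2) * (e o1 - e o3)) _ (e o1 ^+ 2) HS).
    by rewrite !mulf_neq0.
  rewrite /ell; field; by rewrite ?h01 ?h02 ?h03 ?h10 ?h20 ?h30 ?h12 ?h13 ?h21 ?h31 ?h23 ?h32.
- apply: (@key _ _ _ ((e o2 - e o0) * (e o2 - e o1) * (e o2 - e o3)) _ (e o2 ^+ 2) HS).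
    by rewrite !mulf_neq0.
  rewrite /ell; field; by rewrite ?h01 ?h02 ?h03 ?h10 ?h20 ?h30 ?h12 ?h13 ?h21 ?h31 ?h23 ?h32.
- apply: (@key _ _ _ ((e o3 - e o0) * (e o3 - e o1) * (e o3 - e o2)) _ (e o3 ^+ 2) HS).
    by rewrite !mulf_neq0.
  rewrite /ell; field; by rewrite ?h01 ?h02 ?h03 ?h10 ?h20 ?h30 ?h12 ?h13 ?h21 ?h31 ?h23 ?h32.
Qed.
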